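(* Let $k$ be a field of characteristic $\neq 2$, let $\mathcal O$ be the Lie algebra described in the context, and let $J=q(t)k[t]$ be a nonzero ideal of $k[t]$; put $w_i=v_iq(t)$, $i=0,1,2$. Then the ideals $\mathcal I$ of $\mathcal O$ with $J_{\mathcal I}=J$ are exactly the subspaces $\mathcal I=\mathcal O Jt(t-1)\oplus\mathcal S$ where $\mathcal S$ is of one of the following types: (i) $\mathcal S=k\epsilon(w_0t+w_1t)\oplus k\delta(w_0t-w_1t)\oplus k\epsilon\delta\gamma\, w_2t\oplus k\epsilon'(w_0(t-1)+w_2(t-1))\oplus k\delta'(w_0(t-1)-w_2(t-1))\oplus k\epsilon'\delta'\gamma'\, w_1(t-1)$, where $\epsilon,\delta,\gamma,\epsilon',\delta',\gamma'\in\{0,1\}$ with $\epsilon+\delta\neq0\neq\epsilon'+\delta'$; (ii) $\mathcal S=\mathcal S_\eta=\mathrm{span}\{w_0t,\ w_1t,\ w_0(t-1),\ w_2(t-1),\ w_2t+\eta w_1(t-1)\}$ with $0\neq\eta\in k$.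
   Context: $\mathcal O$ is the Lie algebra over $k$ which is a free $k[t]$-module with basis $v_0,v_1,v_2$, with $k[t]$-bilinear bracket determined by $[v_0,v_1]=-v_2(t-1)$, $[v_1,v_2]=-v_0$, $[v_2,v_0]=v_1t$ (it is isomorphic to the Onsager algebra). For an ideal $\mathcal I$ of $\mathcal O$, $J_{\mathcal I}=\{p(t)\in k[t]: v_0p(t)+v_1p_1(t)+v_2p_2(t)\in\mathcal I\text{ for some }p_1,p_2\in k[t]\}$. For an ideal $J$ of $k[t]$, $\mathcal OJ=v_0J\oplus v_1J\oplus v_2J$, and $\mathcal OJt(t-1)=\mathcal O\,(Jt(t-1))$. *)

(* Defs.v *)
From HB Require Import structures.
From mathcomp Require Import all_boot all_order all_algebra.
Set Implicit Arguments. Unset Strict Implicit. Unset Printing Implicit Defensive.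
Import Order.TTheory GRing.Theory Num.Theory.
Local Open Scope ring_scope.

Section Onsager.
Variable K : fieldType.

(* An element of O = v0 k[t] (+) v1 k[t] (+) v2 k[t]: its three coordinates. *)
Record Oelt := mkO { c0 : {poly K}; c1 : {poly K}; c2 : {poly K} }.

Definition zeroO : Oelt := mkO 0 0 0.
Definition addO (x y : Oelt) : Oelt :=
  mkO (c0 x + c0 y) (c1 x + c1 y) (c2 x + c2 y).
Definition pmulO (p : {poly K}) (x : Oelt) : Oelt :=
  mkO (p * c0 x) (p * c1 x) (p * c2 x).
Definition scaleO (a : K) (x : Oelt) : Oelt := pmulO a%:P x.
Definition subO (x y : Oelt) : Oelt := addO x (scaleO (-1) y).

(* The k[t]-bilinear bracket determined by
   [v0,v1] = -v2(t-1), [v1,v2] = -v0, [v2,v0] = v1 t. *)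
Definition brO (x y : Oelt) : Oelt :=
  mkO (- (c1 x * c2 y - c2 x * c1 y))
      ('X * (c2 x * c0 y - c0 x * c2 y))
      (- (('X - 1) * (c0 x * c1 y - c1 x * c0 y))).

Definition v0 : Oelt := mkO 1 0 0.
Definition v1 : Oelt := mkO 0 1 0.
Definition v2 : Oelt := mkO 0 0 1.

Definition is_ideal (I : Oelt -> Prop) : Prop :=
  [/\ I zeroO,
      (forall x y, I x -> I y -> I (addO x y)),
      (forall (a : K) x, I x -> I (scaleO a x)) &
      (forall x y, I y -> I (brO x y))].

Definition J_of (I : Oelt -> Prop) (p : {poly K}) : Prop :=
  exists p1 p2 : {poly K}, I (mkO p p1 p2).

(* O J t(t-1) for J = q k[t]:  v0 J' + v1 J' + v2 J' with J' = q t(t-1) k[t]. *)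
Definition OJtt1 (q : {poly K}) (x : Oelt) : Prop :=
  let m := q * ('X * ('X - 1)) in
  [/\ m %| c0 x, m %| c1 x & m %| c2 x].

Fixpoint spanO (l : seq Oelt) (x : Oelt) : Prop :=
  match l with
  | [::] => x = zeroO
  | v :: l' => exists (a : K) (y : Oelt), spanO l' y /\ x = addO (scaleO a v) y
  end.

Definition direct_sum_eq (A B I : Oelt -> Prop) : Prop :=
  (forall x, I x <-> exists a b, A a /\ B b /\ x = addO a b) /\
  (forall x, A x -> B x -> x = zeroO).

Definition bK (b : bool) : K := (b : nat)%:R.

Definition typeI (q : {poly K}) (S : Oelt -> Prop) : Prop :=
  let w0 := pmulO q v0 in let w1 := pmulO q v1 in let w2 := pmulO q v2 in
  let t := 'X : {poly K} in let t1 := ('X - 1) : {poly K} in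
  exists e d g e' d' g' : bool,
    [/\ e || d, e' || d' &
     forall x, S x <->
       spanO [:: scaleO (bK e) (addO (pmulO t w0) (pmulO t w1));
                 scaleO (bK d) (subO (pmulO t w0) (pmulO t w1));
                 scaleO (bK [&& e, d & g]) (pmulO t w2);
                 scaleO (bK e') (addO (pmulO t1 w0) (pmulO t1 w2));
                 scaleO (bK d') (subO (pmulO t1 w0) (pmulO t1 w2));
                 scaleO (bK [&& e', d' & g']) (pmulO t1 w1)] x].

Definition typeII (q : {poly K}) (S : Oelt -> Prop) : Prop :=
  let w0 := pmulO q v0 in let w1 := pmulO q v1 in let w2 := pmulO q v2 in
  let t := 'X : {poly K} in let t1 := ('X - 1) : {poly K} in
  exists eta : K, eta != 0 /\
    forall x, S x <->
      spanO [:: pmulO t w0; pmulO t w1; pmulO t1 w0; pmulO t1 w2;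
                addO (pmulO t w2) (scaleO eta (pmulO t1 w1))] x.

End Onsager.

(* Main.v *)
Require Import Defs.
From HB Require Import structures.
From mathcomp Require Import all_boot all_order all_algebra.
From mathcomp Require Import ring.
From Stdlib Require Import Classical_Prop.
Import GRing.Theory.
Local Open Scope ring_scope.
Set Implicit Arguments. Unset Strict Implicit.

Section Main.
Variable K : fieldType.
Variable q : {poly K}.
Hypothesis hq : q != 0.

Record V6 := mkV { va0 : K; va1 : K; va2 : K; vb0 : K; vb1 : K; vb2 : K }.
Definition addV (u v : V6) := mkV (va0 u + va0 v) (va1 u + va1 v) (va2 u + va2 v)
  (vb0 u + vb0 v) (vb1 u + vb1 v) (vb2 u + vb2 v).
Definition scaleV (c : K) (u : V6) := mkV (c * va0 u) (c * va1 u) (c * va2 u)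
  (c * vb0 u) (c * vb1 u) (c * vb2 u).
Definition zeroV := mkV 0 0 0 0 0 0.
Definition ip (a b : K) : {poly K} := b%:P * 'X - a%:P * ('X - 1).
Definition Ix (u : V6) : Oelt K :=
  mkO (ip (va0 u) (vb0 u)) (ip (va1 u) (vb1 u)) (ip (va2 u) (vb2 u)).
Definition E (u : V6) : Oelt K := pmulO q (Ix u).
Definition vals (y : Oelt K) : V6 :=
  mkV (c0 y).[0] (c1 y).[0] (c2 y).[0] (c0 y).[1] (c1 y).[1] (c2 y).[1].
Definition adV (x u : V6) : V6 :=
  mkV (- (va1 x * va2 u - va2 x * va1 u)) 0 (va0 x * va1 u - va1 x * va0 u)
      (- (vb1 x * vb2 u - vb2 x * vb1 u)) (vb2 x * vb0 u - vb0 x * vb2 u) 0.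

Lemma ip0 a b : (ip a b).[0] = a.
Proof. rewrite /ip !hornerE; ring. Qed.
Lemma ip1 a b : (ip a b).[1] = b.
Proof. rewrite /ip !hornerE; ring. Qed.

Lemma vals_Ix u : vals (Ix u) = u.
Proof. by case: u => *; rewrite /vals /= !ip0 !ip1. Qed.

Lemma vals_br x y : vals (brO x y) = adV (vals x) (vals y).
Proof. rewrite /vals /adV /=; congr mkV; rewrite !hornerE; ring. Qed.

Lemma br_pmul x y : brO x (pmulO q y) = pmulO q (brO x y).
Proof. rewrite /brO /pmulO /=; congr mkO; ring. Qed.

Lemma red_core f : ('X * ('X - 1)) %| f - ip f.[0] f.[1].
Proof.
have cop : @coprimep K ('X - 0%:P) ('X - 1%:P).
  by apply: coprimep_XsubC2; rewrite subr0 oner_eq0.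
move: cop; rewrite polyC0 subr0 polyC1 => cop.
rewrite Gauss_dvdp //; apply/andP; split.
  have := @dvdp_XsubCl K (f - ip f.[0] f.[1]) 0.
  rewrite polyC0 subr0 => ->; by rewrite /root hornerD hornerN ip0 subrr.
have := @dvdp_XsubCl K (f - ip f.[0] f.[1]) 1.
rewrite polyC1 => ->; by rewrite /root hornerD hornerN ip1 subrr.
Qed.

Lemma red y : OJtt1 q (subO (pmulO q y) (E (vals y))).
Proof.
rewrite /OJtt1 /subO /E /pmulO /scaleO /pmulO /=.
have h f : q * ('X * ('X - 1)) %| q * f + (-1)%:P * (q * ip f.[0] f.[1]).
  have -> : q * f + (-1)%:P * (q * ip f.[0] f.[1]) = q * (f - ip f.[0] f.[1]).
    rewrite polyCN polyC1; ring.
  by rewrite dvdp_mul2l // red_core.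
by split; apply: h.
Qed.

Lemma red_eq y : pmulO q y = addO (subO (pmulO q y) (E (vals y))) (E (vals y)).
Proof. rewrite /subO /addO /scaleO /pmulO /=; congr mkO; rewrite polyCN polyC1; ring. Qed.

Lemma E_add u v : addO (E u) (E v) = E (addV u v).
Proof. rewrite /E /addO /pmulO /Ix /ip /=; congr mkO; rewrite !polyCD; ring. Qed.

Lemma E_scale c u : scaleO c (E u) = E (scaleV c u).
Proof. rewrite /E /scaleO /pmulO /Ix /ip /=; congr mkO; rewrite !polyCM; ring. Qed.

Lemma E_zero : E zeroV = zeroO K.
Proof. rewrite /E /zeroO /pmulO /Ix /ip /=; congr mkO; rewrite !polyC0; ring. Qed.

Lemma OJ_add a b : OJtt1 q a -> OJtt1 q b -> OJtt1 q (addO a b).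
Proof. by case=> h1 h2 h3 [h1' h2' h3']; split; rewrite /= dvdp_add. Qed.

Lemma OJ_scale c a : OJtt1 q a -> OJtt1 q (scaleO c a).
Proof. by case=> h1 h2 h3; split; rewrite /= dvdp_mull. Qed.

Lemma OJ_zero : OJtt1 q (zeroO K).
Proof. by split; rewrite /= dvdp0. Qed.

Lemma OJ_br x a : OJtt1 q a -> OJtt1 q (brO x a).
Proof.
case=> h0 h1 h2; split; rewrite /= ?dvdpNr // ?dvdp_mull // ?dvdp_sub ?dvdp_mull //.
Qed.

Lemma OJ_E u : OJtt1 q (E u) -> u = zeroV.
Proof.
have key a b : q * ('X * ('X - 1)) %| q * ip a b -> a = 0 /\ b = 0.
  rewrite dvdp_mul2l // => h.
  have h0 : 'X %| ip a b by apply: dvdp_trans h; apply: dvdp_mulr.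
  have h1 : ('X - 1) %| ip a b by apply: dvdp_trans h; apply: dvdp_mull.
  move: h0 h1.
  have := @dvdp_XsubCl K (ip a b) 0; rewrite polyC0 subr0 => ->.
  have := @dvdp_XsubCl K (ip a b) 1; rewrite polyC1 => ->.
  by rewrite /root ip0 ip1 => /eqP -> /eqP ->.
case: u => x0 x1 x2 y0 y1 y2; rewrite /E /pmulO /Ix /= => -[/key [-> ->] /key [-> ->] /key [-> ->]].
by [].
Qed.


Lemma br_addr (x a b : Oelt K) : brO x (addO a b) = addO (brO x a) (brO x b).
Proof. rewrite /brO /addO /=; congr mkO; ring. Qed.

Lemma br_E (x : Oelt K) u : exists d, OJtt1 q d /\
  brO x (E u) = addO d (E (adV (vals x) u)).
Proof.
exists (subO (pmulO q (brO x (Ix u))) (E (vals (brO x (Ix u))))); split; first exact: red.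
by rewrite /E br_pmul -/(E _) {1}red_eq vals_br vals_Ix.
Qed.

Definition Good (P : V6 -> Prop) : Prop :=
  [/\ P zeroV, (forall u v, P u -> P v -> P (addV u v)),
      (forall c u, P u -> P (scaleV c u)),
      (forall w u, P u -> P (adV w u)) &
      (forall al be : K, exists u, [/\ P u, va0 u = al & vb0 u = be])].

Definition Jcond (I : Oelt K -> Prop) := forall p : {poly K}, J_of I p <-> q %| p.

Definition Decomp (I : Oelt K -> Prop) (P : V6 -> Prop) :=
  forall x, I x <-> exists a u, [/\ OJtt1 q a, P u & x = addO a (E u)].

Lemma Back I P : Good P -> Decomp I P -> is_ideal I /\ Jcond I.
Proof.
case=> P0 Padd Pscale Pad Psurj hD; split; first split.
- apply/hD; exists (zeroO K), zeroV; split; [exact: OJ_zero | exact: P0 |].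
  by rewrite E_zero /addO /zeroO /=; congr mkO; ring.
- move=> x y /hD [a [u [ha hu ->]]] /hD [a' [u' [ha' hu' ->]]].
  apply/hD; exists (addO a a'), (addV u u'); split; [exact: OJ_add| exact: Padd|].
  rewrite -E_add; case: a {ha} => ? ? ?; case: a' {ha'} => ? ? ?; rewrite /addO /=.
  by congr mkO; ring.
- move=> c x /hD [a [u [ha hu ->]]].
  apply/hD; exists (scaleO c a), (scaleV c u); split; [exact: OJ_scale| exact: Pscale|].
  rewrite -E_scale; rewrite /scaleO /pmulO /addO /=; congr mkO; ring.
- move=> x y /hD [a [u [ha hu ->]]].
  rewrite br_addr; have [d [hd ->]] := br_E x u.
  apply/hD; exists (addO (brO x a) d), (adV (vals x) u); split.
  + by apply: OJ_add => //; exact: OJ_br.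
  + exact: Pad.
  + set z := E _; set z2 := brO x a; rewrite /addO /=; congr mkO; ring.
move=> p; split.
- case=> p1 [p2 /hD [a [u [[ha _ _] _ hu]]]].
  have -> : p = c0 a + c0 (E u) by rewrite -[p]/(c0 (mkO p p1 p2)) hu.
  apply: dvdp_add; last by rewrite /E /= dvdp_mulr.
  by apply: dvdp_trans ha; apply: dvdp_mulr.
- case/dvdpP => h ->.
  have [u [hu hu0 hu1]] := Psurj h.[0] h.[1].
  exists (c1 (E u)), (c2 (E u)); apply/hD.
  exists (mkO (h * q - c0 (E u)) 0 0), u; split => //.
  + split; rewrite /= ?dvdp0 //.
    have -> : h * q - q * ip (va0 u) (vb0 u) = q * (h - ip h.[0] h.[1]).
      by rewrite hu0 hu1; ring.
    by rewrite dvdp_mul2l // red_core.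
  + by rewrite /addO /=; congr mkO; ring.
Qed.

Section Forth.
Variable I : Oelt K -> Prop.
Hypothesis hI : is_ideal I.
Hypothesis hJ : Jcond I.

Lemma I_add x y : I x -> I y -> I (addO x y).
Proof. by case: hI => _ h _ _; apply: h. Qed.
Lemma I_scale c x : I x -> I (scaleO c x).
Proof. by case: hI => _ _ h _; apply: h. Qed.
Lemma I_br x y : I y -> I (brO x y).
Proof. by case: hI => _ _ _ h; apply: h. Qed.
Lemma I_zero : I (zeroO K).
Proof. by case: hI. Qed.
Lemma I_eq x y : I x -> x = y -> I y.
Proof. by move=> h <-. Qed.

Lemma I_sub x y : I x -> I y -> I (subO x y).
Proof. by move=> hx hy; apply: I_add => //; apply: I_scale. Qed.

Lemma I_cancel d z : I (addO d z) -> I d -> I z.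
Proof.
move=> h hd; apply: (I_eq (I_sub h hd)); rewrite /subO /addO /scaleO /pmulO /=.
by case: z {h} => *; case: d {hd} => * /=; congr mkO; rewrite polyCN polyC1; ring.
Qed.

Lemma I_c0 x : I x -> q %| c0 x.
Proof. by case: x => x0 x1 x2 h; apply/hJ; exists x1, x2. Qed.

Lemma I_div x : I x -> exists y, x = pmulO q y.
Proof.
move=> h.
have h0 := I_c0 h.
have h1 : q %| c1 x.
  have := I_c0 (I_br (v2 K) h); rewrite /=.
  by have -> : - (0 * c2 x - 1 * c1 x) = c1 x by ring.
have h2 : q %| c2 x.
  have := I_c0 (I_br (v1 K) h); rewrite /=.
  have -> : - (1 * c2 x - 0 * c1 x) = - c2 x by ring.
  by rewrite dvdpNr.
case/dvdpP: h0 => f0 e0; case/dvdpP: h1 => f1 e1; case/dvdpP: h2 => f2 e2.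
exists (mkO f0 f1 f2); case: x h e0 e1 e2 => x0 x1 x2 /= _ -> -> ->.
by rewrite /pmulO /=; congr mkO; ring.
Qed.

Lemma OJ_in x : OJtt1 q x -> I x.
Proof.
have [p1 [p2 hx0]] : J_of I q by apply/hJ.
set m := q * ('X * ('X - 1)).
have g2 h : I (mkO 0 0 (h * m)).
  apply: (I_eq (I_br (mkO (- h) 0 0) (I_br (v2 K) hx0))); rewrite /brO /v1 /v2 /=; congr mkO; rewrite /m; ring.
have g1 h : I (mkO 0 (h * m) 0).
  apply: (I_eq (I_br (mkO (- h) 0 0) (I_br (v1 K) hx0))); rewrite /brO /v1 /v2 /=; congr mkO; rewrite /m; ring.
have g0 h : I (mkO (h * m) 0 0).
  apply: (I_eq (I_br (mkO 0 (-1) 0) (g2 h))); rewrite /brO /v1 /v2 /=; congr mkO; rewrite /m; ring.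
case=> /dvdpP [h0 e0] /dvdpP [h1 e1] /dvdpP [h2 e2].
apply: (I_eq (I_add (g0 h0) (I_add (g1 h1) (g2 h2)))).
by case: x e0 e1 e2 => x0 x1 x2 /= -> -> ->; rewrite /addO /m /=; congr mkO; ring.
Qed.

Lemma Forth_decomp : Decomp I (fun u => I (E u)).
Proof.
move=> x; split.
- move=> hx; have [y ey] := I_div hx.
  exists (subO (pmulO q y) (E (vals y))), (vals y); split; first exact: red.
    by apply: (I_cancel _ (OJ_in (red y))); rewrite -red_eq -ey.
  by rewrite ey {1}red_eq.
- case=> a [u [ha hu ->]]; apply: I_add => //; exact: OJ_in.
Qed.

Lemma Forth_good : Good (fun u => I (E u)).
Proof.
split.
- by rewrite E_zero; exact: I_zero.
- by move=> u v hu hv; rewrite -E_add; apply: I_add.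
- by move=> c u hu; rewrite -E_scale; apply: I_scale.
- move=> w u hu; have [d [hd e]] := br_E (Ix w) u.
  have := I_br (Ix w) hu; rewrite e vals_Ix => h.
  exact: (I_cancel h (OJ_in hd)).
- move=> al be.
  have [p1 [p2 h]] : J_of I (q * ip al be) by apply/hJ; apply: dvdp_mulr.
  have [y ey] := I_div h.
  have ec : c0 y = ip al be by case: ey => /(mulfI hq) ->.
  exists (vals y); split.
  + by apply: (I_cancel _ (OJ_in (red y))); rewrite -red_eq -ey.
  + by rewrite /vals ec ip0.
  + by rewrite /vals ec ip1.
Qed.

End Forth.


Definition PcI (e d g e' d' g' : bool) (u : V6) : Prop :=
  [/\ (va0 u + va2 u != 0) ==> e', (va0 u - va2 u != 0) ==> d',
      (vb0 u + vb1 u != 0) ==> e,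
      (vb0 u - vb1 u != 0) ==> d &
      ((va1 u != 0) ==> [&& e', d' & g'] /\ (vb2 u != 0) ==> [&& e, d & g])].
Definition PcII (eta : K) (u : V6) : Prop := va1 u = - eta * vb2 u.

Lemma pbool (Q : Prop) : exists b : bool, b <-> Q.
Proof.
case: (Classical_Prop.classic Q) => h; first by exists true.
by exists false; split.
Qed.

Section Class.
Hypothesis h2 : (2%:R : K) != 0.
Variable P : V6 -> Prop.
Hypothesis hP : Good P.

Let P0 : P zeroV. Proof. by case: hP. Qed.
Let Padd u v : P u -> P v -> P (addV u v). Proof. by case: hP => _ h _ _ _; apply: h. Qed.
Let Pscale c u : P u -> P (scaleV c u). Proof. by case: hP => _ _ h _ _; apply: h. Qed.
Let Pad w u : P u -> P (adV w u). Proof. by case: hP => _ _ _ h _; apply: h. Qed.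
Let Pe u v : P u -> u = v -> P v. Proof. by move=> h <-. Qed.
Let Psub u v : P u -> P v -> P (addV u (scaleV (-1) v)).
Proof. by move=> hu hv; apply: Padd => //; apply: Pscale. Qed.
Let Pnz s w : (s != 0 -> P w) -> P (scaleV s w).
Proof.
have [->|hs] := eqVneq s 0; last by move=> h; apply: Pscale; apply: h.
by move=> _; apply: (Pe P0); case: w => * ; rewrite /scaleV /zeroV /=; congr mkV; ring.
Qed.
Let Pinv s w : P (scaleV s w) -> s != 0 -> P w.
Proof.
move=> h hs; apply: (Pe (Pscale s^-1 h)); case: w {h} => * ; rewrite /scaleV /=.
by congr mkV; rewrite mulrA mulVf // mul1r.
Qed.

Let swapB u : P u -> P (mkV 0 0 0 (vb1 u) (vb0 u) 0).
Proof.
move=> h; apply: (Pe (Pad (mkV 0 0 0 0 0 1) h)); rewrite /adV /=; congr mkV; ring.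
Qed.
Let swapA u : P u -> P (mkV (- va2 u) 0 (- va0 u) 0 0 0).
Proof.
move=> h; apply: (Pe (Pad (mkV 0 1 0 0 0 0) h)); rewrite /adV /=; congr mkV; ring.
Qed.
Let S1 u : P u -> P (mkV 0 0 0 (vb0 u) (vb1 u) 0).
Proof. by move=> h; have := swapB (swapB h). Qed.
Let S2 u : P u -> P (mkV (va0 u) 0 (va2 u) 0 0 0).
Proof. by move=> h; apply: (Pe (swapA (swapA h))); rewrite /= !opprK. Qed.
Let S3 u : P u -> P (mkV 0 (va1 u) 0 0 0 (vb2 u)).
Proof.
move=> h; apply: (Pe (Psub (Psub h (S1 h)) (S2 h))).
by case: u h => * /=; rewrite /addV /scaleV /=; congr mkV; ring.
Qed.
Let decomp u : P u <-> [/\ P (mkV (va0 u) 0 (va2 u) 0 0 0),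
  P (mkV 0 0 0 (vb0 u) (vb1 u) 0) & P (mkV 0 (va1 u) 0 0 0 (vb2 u))].
Proof.
split; first by move=> h; split; [exact: S2|exact: S1|exact: S3].
case=> h1 h2' h3; apply: (Pe (Padd h1 (Padd h2' h3))).
by case: u {h1 h2' h3} => * ; rewrite /addV /=; congr mkV; ring.
Qed.
Let S4 u : P u -> va1 u != 0 -> P (mkV 1 0 0 0 0 0) /\ P (mkV 0 0 1 0 0 0).
Proof.
move=> h hn; split.
  apply: (Pinv _ hn); apply: (Pe (Pad (mkV 0 0 1 0 0 0) h)); rewrite /adV /scaleV /=; congr mkV; ring.
apply: (Pinv _ hn); apply: (Pe (Pad (mkV 1 0 0 0 0 0) h)); rewrite /adV /scaleV /=; congr mkV; ring.
Qed.
Let S5 u : P u -> vb2 u != 0 -> P (mkV 0 0 0 1 0 0) /\ P (mkV 0 0 0 0 1 0).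
Proof.
move=> h hn; split.
  have hn' : - vb2 u != 0 by rewrite oppr_eq0.
  apply: (Pinv _ hn').
  apply: (Pe (Pad (mkV 0 0 0 0 1 0) h)); rewrite /adV /scaleV /=; congr mkV; ring.
have hn' : - vb2 u != 0 by rewrite oppr_eq0.
apply: (Pinv _ hn').
apply: (Pe (Pad (mkV 0 0 0 1 0 0) h)); rewrite /adV /scaleV /=; congr mkV; ring.
Qed.

Let nz_half (x : K) : x / 2%:R != 0 -> x != 0.
Proof. by apply: contra_neq => ->; rewrite mul0r. Qed.

Let W1 (e d : bool) (he : e <-> P (mkV 0 0 0 1 1 0)) (hd : d <-> P (mkV 0 0 0 1 (-1) 0)) x y :
  P (mkV 0 0 0 x y 0) <-> ((x + y != 0) ==> e) /\ ((x - y != 0) ==> d).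
Proof.
split.
- move=> h; have hs := swapB h; rewrite /= in hs; split; apply/implyP => hn.
  + apply/he; apply: (Pinv _ hn); apply: (Pe (Padd h hs)); rewrite /addV /scaleV /=; congr mkV; ring.
  + apply/hd; apply: (Pinv _ hn); apply: (Pe (Psub h hs)); rewrite /addV /scaleV /=; congr mkV; ring.
- case=> /implyP h1 /implyP h3.
  have k1 : P (scaleV ((x + y) / 2%:R) (mkV 0 0 0 1 1 0)).
    by apply: Pnz => /nz_half /h1 /he.
  have k2 : P (scaleV ((x - y) / 2%:R) (mkV 0 0 0 1 (-1) 0)).
    by apply: Pnz => /nz_half /h3 /hd.
  apply: (Pe (Padd k1 k2)); rewrite /addV /scaleV /=; congr mkV; try ring; field; exact: h2.
Qed.

Let W0 (e d : bool) (he : e <-> P (mkV 1 0 1 0 0 0)) (hd : d <-> P (mkV 1 0 (-1) 0 0 0)) x y :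
  P (mkV x 0 y 0 0 0) <-> ((x + y != 0) ==> e) /\ ((x - y != 0) ==> d).
Proof.
split.
- move=> h; have hs := swapA h; rewrite /= in hs; split; apply/implyP => hn.
  + apply/he; apply: (Pinv _ hn); apply: (Pe (Psub h hs)); rewrite /addV /scaleV /=; congr mkV; ring.
  + apply/hd; apply: (Pinv _ hn); apply: (Pe (Padd h hs)); rewrite /addV /scaleV /=; congr mkV; ring.
- case=> /implyP h1 /implyP h3.
  have k1 : P (scaleV ((x + y) / 2%:R) (mkV 1 0 1 0 0 0)).
    by apply: Pnz => /nz_half /h1 /he.
  have k2 : P (scaleV ((x - y) / 2%:R) (mkV 1 0 (-1) 0 0 0)).
    by apply: Pnz => /nz_half /h3 /hd.
  apply: (Pe (Padd k1 k2)); rewrite /addV /scaleV /=; congr mkV; try ring; field; exact: h2.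
Qed.

Lemma classify :
  (exists e d g e' d' g' : bool,
      [/\ e || d, e' || d' & forall u, P u <-> PcI e d g e' d' g' u]) \/
  (exists eta : K, eta != 0 /\ forall u, P u <-> PcII eta u).
Proof.
have [e he] := pbool (P (mkV 0 0 0 1 1 0)).
have [d hd] := pbool (P (mkV 0 0 0 1 (-1) 0)).
have [g hg] := pbool (P (mkV 0 0 0 0 0 1)).
have [e' he'] := pbool (P (mkV 1 0 1 0 0 0)).
have [d' hd'] := pbool (P (mkV 1 0 (-1) 0 0 0)).
have [g' hg'] := pbool (P (mkV 0 1 0 0 0 0)).
have o1 : (1 : K) != 0 by rewrite oner_eq0.
have gE : g -> e && d.
  move/hg => h; have [k1 _] := S5 h o1.
  by have /W1 := k1; move/(_ e d he hd); rewrite addr0 subr0 o1 /= => -[-> ->].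
have gE' : g' -> e' && d'.
  move/hg' => h; have [k1 _] := S4 h o1.
  by have /W0 := k1; move/(_ e' d' he' hd'); rewrite addr0 subr0 o1 /= => -[-> ->].
have [[[c [hc hc1]] ng] | nB] :=
  classic ((exists c, c != 0 /\ P (mkV 0 c 0 0 0 1)) /\ ~~ g).
- right; exists (- c); split; first by rewrite oppr_eq0.
  have [a1 a2] := S4 hc1 hc.
  have [b1 b2] := S5 hc1 o1.
  have ng' : ~ P (mkV 0 1 0 0 0 0).
    move=> h; move/negP: ng; apply; apply/hg.
    apply: (Pe (Psub hc1 (Pscale c h))); rewrite /addV /scaleV /=; congr mkV; ring.
  move=> u; split.
  + case/decomp => _ _ h3.
    have h4 := Psub h3 (Pscale (vb2 u) hc1).
    have [e0|hn] := eqVneq (va1 u - vb2 u * c) 0.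
      by rewrite /PcII; move/eqP: e0; rewrite subr_eq0 => /eqP ->; ring.
    exfalso; apply: ng'; apply: (Pinv _ hn); apply: (Pe h4).
    rewrite /addV /scaleV /=; congr mkV; ring.
  + rewrite /PcII => hu; apply/decomp; split.
    * apply: (Pe (Padd (Pscale (va0 u) a1) (Pscale (va2 u) a2))).
      rewrite /addV /scaleV /=; congr mkV; ring.
    * apply: (Pe (Padd (Pscale (vb0 u) b1) (Pscale (vb1 u) b2))).
      rewrite /addV /scaleV /=; congr mkV; ring.
    * apply: (Pe (Pscale (vb2 u) hc1)); rewrite /scaleV /= hu; congr mkV; ring.
- left.
  have nB' cc : cc != 0 -> P (mkV 0 cc 0 0 0 1) -> g.
    move=> hcc h; apply/negPn/negP => ng0; apply: nB; split => //.
    by exists cc.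
  have Ry x y : P (mkV 0 x 0 0 0 y) -> y != 0 -> g.
    move=> h hy.
    have h' : P (mkV 0 (x / y) 0 0 0 1).
      apply: (Pinv _ hy); apply: (Pe h); rewrite /scaleV /=; congr mkV; try ring.
      by rewrite mulrCA mulfV // mulr1.
    have [x0|hx] := eqVneq x 0.
      by apply/hg; apply: (Pe h'); rewrite x0 mul0r.
    by apply: (nB' _ _ h'); rewrite mulf_eq0 negb_or hx invr_eq0 hy.
  have Rx x y : P (mkV 0 x 0 0 0 y) -> x != 0 -> g'.
    move=> h hx; apply/hg'; apply: (Pinv _ hx).
    have [y0|hy] := eqVneq y 0.
      by apply: (Pe h); rewrite y0 /scaleV /=; congr mkV; ring.
    have /hg k := Ry _ _ h hy.
    apply: (Pe (Psub h (Pscale y k))); rewrite /addV /scaleV /=; congr mkV; ring.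
  exists e, d, g, e', d', g'; split.
  + have [u [hu _ hu1]] := (match hP with And5 _ _ _ _ h => h end) 0 1.
    have := S1 hu; rewrite hu1 => /(W1 he hd) [].
    case: e {he gE} => //; case: d {hd} => //= /negPn/eqP i1 /negPn/eqP i2.
    exfalso; move/negP: h2; apply; apply/eqP.
    have -> : (2%:R : K) = (1 + vb1 u) + (1 - vb1 u) by ring.
    by rewrite i1 i2 addr0.
  + have [u [hu hu0 _]] := (match hP with And5 _ _ _ _ h => h end) 1 0.
    have := S2 hu; rewrite hu0 => /(W0 he' hd') [].
    case: e' {he' gE'} => //; case: d' {hd'} => //= /negPn/eqP i1 /negPn/eqP i2.
    exfalso; move/negP: h2; apply; apply/eqP.
    have -> : (2%:R : K) = (1 + va2 u) + (1 - va2 u) by ring.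
    by rewrite i1 i2 addr0.
  + move=> u; split.
    * case/decomp => /(W0 he' hd') [k1 k2] /(W1 he hd) [k3 k4] k5; split => //; split.
      - by apply/implyP => /(Rx _ _ k5) hh; rewrite hh andbT gE'.
      - by apply/implyP => /(Ry _ _ k5) hh; rewrite hh andbT gE.
    * case=> k1 k2 k3 k4 [/implyP k5 /implyP k6]; apply/decomp; split.
      - by apply/(W0 he' hd').
      - by apply/(W1 he hd).
      - have l1 : P (scaleV (va1 u) (mkV 0 1 0 0 0 0)).
          by apply: Pnz => /k5 /and3P [_ _ /hg'].
        have l2 : P (scaleV (vb2 u) (mkV 0 0 0 0 0 1)).
          by apply: Pnz => /k6 /and3P [_ _ /hg].
        apply: (Pe (Padd l1 l2)); rewrite /addV /scaleV /=; congr mkV; ring.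
Qed.

End Class.


Lemma impl_comb (b : bool) (x y z c c' : K) :
  (x != 0) ==> b -> (y != 0) ==> b -> z = c * x + c' * y -> (z != 0) ==> b.
Proof.
case: b; first by rewrite !implybT.
rewrite !implybF !negbK => /eqP -> /eqP -> ->; rewrite !mulr0 addr0 eqxx.
by [].
Qed.

Lemma impl_and3 (x : K) a b c : (x != 0) ==> [&& a, b & c] -> (x != 0) ==> a.
Proof. by case: (x != 0) => //= /and3P []. Qed.
Lemma impl_and3b (x : K) a b c : (x != 0) ==> [&& a, b & c] -> (x != 0) ==> b.
Proof. by case: (x != 0) => //= /and3P []. Qed.
Lemma impl0 (b : bool) : ((0 : K) != 0) ==> b.
Proof. by rewrite eqxx. Qed.

Lemma GoodI (e d g e' d' g' : bool) : e || d -> e' || d' -> Good (PcI e d g e' d' g').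
Proof.
move=> hed hed'; split.
- by split; rewrite /= ?addr0 ?subr0 ?eqxx.
- move=> u v [k1 k2 k3 k4 [k5 k6]] [l1 l2 l3 l4 [l5 l6]]; split; [| | | |split].
  + by apply: (impl_comb k1 l1 (c := 1) (c' := 1)); rewrite /=; ring.
  + by apply: (impl_comb k2 l2 (c := 1) (c' := 1)); rewrite /=; ring.
  + by apply: (impl_comb k3 l3 (c := 1) (c' := 1)); rewrite /=; ring.
  + by apply: (impl_comb k4 l4 (c := 1) (c' := 1)); rewrite /=; ring.
  + by apply: (impl_comb k5 l5 (c := 1) (c' := 1)); rewrite /=; ring.
  + by apply: (impl_comb k6 l6 (c := 1) (c' := 1)); rewrite /=; ring.
- move=> c u [k1 k2 k3 k4 [k5 k6]]; split; [| | | |split].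
  + by apply: (impl_comb k1 k1 (c := c) (c' := 0)); rewrite /=; ring.
  + by apply: (impl_comb k2 k2 (c := c) (c' := 0)); rewrite /=; ring.
  + by apply: (impl_comb k3 k3 (c := c) (c' := 0)); rewrite /=; ring.
  + by apply: (impl_comb k4 k4 (c := c) (c' := 0)); rewrite /=; ring.
  + by apply: (impl_comb k5 k5 (c := c) (c' := 0)); rewrite /=; ring.
  + by apply: (impl_comb k6 k6 (c := c) (c' := 0)); rewrite /=; ring.
- move=> w u [k1 k2 k3 k4 [k5 k6]]; split; [| | | |split].
  + apply: (impl_comb (impl_and3 k5) k1 (c := va0 w + va2 w) (c' := - va1 w)).
    rewrite /=; ring.
  + apply: (impl_comb (impl_and3b k5) k2 (c := va2 w - va0 w) (c' := va1 w)).
    rewrite /=; ring.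
  + apply: (impl_comb (impl_and3 k6) k3 (c := - (vb0 w + vb1 w)) (c' := vb2 w)).
    rewrite /=; ring.
  + apply: (impl_comb (impl_and3b k6) k4 (c := vb0 w - vb1 w) (c' := - vb2 w)).
    rewrite /=; ring.
  + exact: impl0.
  + exact: impl0.
- move=> al be.
  exists (mkV al 0 (if e' then al else - al) be (if e then be else - be) 0).
  split => //; move: hed hed'.
  by case: e; case: d; case: e'; case: d' => //= _ _; split; rewrite /= ?subrr ?eqxx ?implybT.
Qed.

Lemma GoodII (eta : K) : Good (PcII eta).
Proof.
rewrite /PcII; split => /=.
- by rewrite mulr0.
- by move=> u v -> ->; ring.
- by move=> c u ->; ring.
- by move=> w u _; rewrite mulr0.
- by move=> al be; exists (mkV al 0 0 be 0 0); split => //=; rewrite mulr0.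
Qed.


Fixpoint spanV (l : seq V6) (u : V6) : Prop :=
  match l with
  | [::] => u = zeroV
  | v :: l' => exists (a : K) (y : V6), spanV l' y /\ u = addV (scaleV a v) y
  end.

Lemma spanE l x : spanO (map E l) x <-> exists u, x = E u /\ spanV l u.
Proof.
elim: l x => [|v l IH] x /=.
  by split; [move=> ->; exists zeroV; rewrite E_zero | case=> u [-> ->]; rewrite E_zero].
split.
- case=> a [y [/IH [u [-> hu]] ->]].
  exists (addV (scaleV a v) u); split; first by rewrite -E_add -E_scale.
  by exists a, u.
- case=> u [-> [a [y [hy ->]]]]; exists a, (E y); split.
    by apply/IH; exists y.
  by rewrite -E_add -E_scale.
Qed.

Lemma span6 u1 u2 u3 u4 u5 u6 u : spanV [:: u1; u2; u3; u4; u5; u6] u <->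
  exists a1 a2 a3 a4 a5 a6, u = addV (scaleV a1 u1) (addV (scaleV a2 u2)
    (addV (scaleV a3 u3) (addV (scaleV a4 u4) (addV (scaleV a5 u5)
    (addV (scaleV a6 u6) zeroV))))).
Proof.
split.
- move=> [a1 [y1 [[a2 [y2 [[a3 [y3 [[a4 [y4 [[a5 [y5 [[a6 [y6 [-> ->]]] ->]]] ->]]] ->]]] ->]]] ->]]].
  by exists a1, a2, a3, a4, a5, a6.
- move=> [a1 [a2 [a3 [a4 [a5 [a6 ->]]]]]].
  do 6 (eexists; eexists; split; last reflexivity).
  reflexivity.
Qed.

Lemma span5 u1 u2 u3 u4 u5 u : spanV [:: u1; u2; u3; u4; u5] u <->
  exists a1 a2 a3 a4 a5, u = addV (scaleV a1 u1) (addV (scaleV a2 u2)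
    (addV (scaleV a3 u3) (addV (scaleV a4 u4) (addV (scaleV a5 u5) zeroV)))).
Proof.
split.
- move=> [a1 [y1 [[a2 [y2 [[a3 [y3 [[a4 [y4 [[a5 [y5 [-> ->]]] ->]]] ->]]] ->]]] ->]]].
  by exists a1, a2, a3, a4, a5.
- move=> [a1 [a2 [a3 [a4 [a5 ->]]]]].
  do 5 (eexists; eexists; split; last reflexivity).
  reflexivity.
Qed.

Lemma bK0 : bK K false = 0. Proof. by []. Qed.
Lemma bK1 : bK K true = 1. Proof. by rewrite /bK /= mulr1n. Qed.

Lemma bK_impl (b : bool) (z c : K) : z = c * bK K b -> (z != 0) ==> b.
Proof. move=> ->; case: b; first by rewrite implybT. by rewrite bK0 mulr0 eqxx. Qed.

Lemma bK_fix (b : bool) (z : K) : (z != 0) ==> b -> z * bK K b = z.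
Proof.
case: b => /=; first by rewrite bK1 mulr1.
by rewrite implybF negbK => /eqP ->; rewrite mul0r.
Qed.


Definition vI (e d g e' d' g' : bool) : seq V6 :=
  [:: mkV 0 0 0 (bK K e) (bK K e) 0; mkV 0 0 0 (bK K d) (- bK K d) 0;
      mkV 0 0 0 0 0 (bK K [&& e, d & g]); mkV (- bK K e') 0 (- bK K e') 0 0 0;
      mkV (- bK K d') 0 (bK K d') 0 0 0; mkV 0 (- bK K [&& e', d' & g']) 0 0 0 0].
Definition vII (eta : K) : seq V6 :=
  [:: mkV 0 0 0 1 0 0; mkV 0 0 0 0 1 0; mkV (-1) 0 0 0 0 0; mkV 0 0 (-1) 0 0 0;
      mkV 0 (- eta) 0 0 0 1].

Lemma typeI_iff S : typeI q S <-> exists e d g e' d' g' : bool,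
  [/\ e || d, e' || d' & forall x, S x <-> spanO (map E (vI e d g e' d' g')) x].
Proof.
have L e d g e' d' g' : [:: scaleO (bK K e) (addO (pmulO 'X (pmulO q (v0 K))) (pmulO 'X (pmulO q (v1 K))));
                 scaleO (bK K d) (subO (pmulO 'X (pmulO q (v0 K))) (pmulO 'X (pmulO q (v1 K))));
                 scaleO (bK K [&& e, d & g]) (pmulO 'X (pmulO q (v2 K)));
                 scaleO (bK K e') (addO (pmulO ('X - 1) (pmulO q (v0 K))) (pmulO ('X - 1) (pmulO q (v2 K))));
                 scaleO (bK K d') (subO (pmulO ('X - 1) (pmulO q (v0 K))) (pmulO ('X - 1) (pmulO q (v2 K))));
                 scaleO (bK K [&& e', d' & g']) (pmulO ('X - 1) (pmulO q (v1 K)))] =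
     map E (vI e d g e' d' g').
  rewrite /vI /=; congr [:: _; _; _; _; _; _];
  rewrite /E /Ix /ip /subO /scaleO /addO /pmulO /v0 /v1 /v2 /=; congr mkO;
  rewrite ?polyC0 ?polyCN ?polyC1; ring.
rewrite /typeI; split.
- case=> e [d [g [e' [d' [g' [h1 h2' h3]]]]]]; exists e, d, g, e', d', g'; split => // x.
  by rewrite -L.
- case=> e [d [g [e' [d' [g' [h1 h2' h3]]]]]]; exists e, d, g, e', d', g'; split => // x.
  by rewrite L.
Qed.

Lemma typeII_iff S : typeII q S <-> exists eta : K, eta != 0 /\
  forall x, S x <-> spanO (map E (vII eta)) x.
Proof.
have L eta : [:: pmulO 'X (pmulO q (v0 K)); pmulO 'X (pmulO q (v1 K));
   pmulO ('X - 1) (pmulO q (v0 K)); pmulO ('X - 1) (pmulO q (v2 K));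
   addO (pmulO 'X (pmulO q (v2 K))) (scaleO eta (pmulO ('X - 1) (pmulO q (v1 K))))] =
   map E (vII eta).
  rewrite /vII /=; congr [:: _; _; _; _; _];
  rewrite /E /Ix /ip /subO /scaleO /addO /pmulO /v0 /v1 /v2 /=; congr mkO;
  rewrite ?polyC0 ?polyCN ?polyC1; ring.
rewrite /typeII; split.
- by case=> eta [h1 h3]; exists eta; split => // x; rewrite -L.
- by case=> eta [h1 h3]; exists eta; split => // x; rewrite L.
Qed.


Lemma spanPcII eta u : spanV (vII eta) u <-> PcII eta u.
Proof.
rewrite /vII span5 /PcII; split.
- by case=> a1 [a2 [a3 [a4 [a5 ->]]]]; rewrite /=; ring.
- move=> h; exists (vb0 u), (vb1 u), (- va0 u), (- va2 u), (vb2 u).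
  case: u h => x0 x1 x2 y0 y1 y2 /= ->; rewrite /addV /scaleV /=; congr mkV; ring.
Qed.

Lemma spanPcI (h2 : (2%:R : K) != 0) e d g e' d' g' u :
  spanV (vI e d g e' d' g') u <-> PcI e d g e' d' g' u.
Proof.
rewrite /vI span6 /PcI; split.
- case=> a1 [a2 [a3 [a4 [a5 [a6 ->]]]]]; split; [| | | |split].
  + by apply: (bK_impl (c := - (2%:R * a4))); rewrite /=; ring.
  + by apply: (bK_impl (c := - (2%:R * a5))); rewrite /=; ring.
  + by apply: (bK_impl (c := 2%:R * a1)); rewrite /=; ring.
  + by apply: (bK_impl (c := 2%:R * a2)); rewrite /=; ring.
  + by apply: (bK_impl (c := - a6)); rewrite /=; ring.
  + by apply: (bK_impl (c := a3)); rewrite /=; ring.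
- case: u => x0 x1 x2 y0 y1 y2 /= [k1 k2 k3 k4 [k5 k6]].
  have f1 : (y0 + y1) / 2%:R * bK K e = (y0 + y1) / 2%:R.
    by apply: bK_fix; apply: (impl_comb k3 k3 (c := 2%:R^-1) (c' := 0)); ring.
  have f2 : (y0 - y1) / 2%:R * bK K d = (y0 - y1) / 2%:R.
    by apply: bK_fix; apply: (impl_comb k4 k4 (c := 2%:R^-1) (c' := 0)); ring.
  have f3 : y2 * bK K [&& e, d & g] = y2 by apply: bK_fix.
  have f4 : - ((x0 + x2) / 2%:R) * bK K e' = - ((x0 + x2) / 2%:R).
    by apply: bK_fix; apply: (impl_comb k1 k1 (c := - 2%:R^-1) (c' := 0)); ring.
  have f5 : (x2 - x0) / 2%:R * bK K d' = (x2 - x0) / 2%:R.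
    by apply: bK_fix; apply: (impl_comb k2 k2 (c := - 2%:R^-1) (c' := 0)); ring.
  have f6 : - x1 * bK K [&& e', d' & g'] = - x1.
    by apply: bK_fix; apply: (impl_comb k5 k5 (c := -1) (c' := 0)); ring.
  exists ((y0 + y1) / 2%:R), ((y0 - y1) / 2%:R), y2, (- ((x0 + x2) / 2%:R)),
    ((x2 - x0) / 2%:R), (- x1).
  rewrite /addV /scaleV /= !mulrN f1 f2 f3 f4 f5 f6; congr mkV; field; exact: h2.
Qed.

End Main.

Unset Implicit Arguments.

Theorem proposition4p8 (K : fieldType) (q : {poly K}) :
  (2%:R : K) != 0 -> q != 0 ->
  forall I : Oelt K -> Prop,
    (is_ideal I /\ (forall p : {poly K}, J_of I p <-> q %| p)) <->
    (exists S : Oelt K -> Prop,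
        (typeI q S \/ typeII q S) /\ direct_sum_eq (OJtt1 q) S I).
Proof.
move=> h2 hq I; split.
- case=> hI hJ.
  have G := Forth_good hq hI hJ.
  have D := Forth_decomp hq hI hJ.
  exists (fun x => exists u, x = E q u /\ I (E q u)); split.
  + case: (classify h2 G) => [[e [d [g [e' [d' [g' [he hd' hc]]]]]]] | [eta [heta hc]]].
    * left; apply/typeI_iff; exists e, d, g, e', d', g'; split => // x.
      rewrite spanE; split; case=> u [-> hu]; exists u; split => //.
        by apply/spanPcI => //; apply/hc.
      by apply/hc; apply/spanPcI.
    * right; apply/typeII_iff; exists eta; split => // x.
      rewrite spanE; split; case=> u [-> hu]; exists u; split => //.
        by apply/spanPcII; apply/hc.
      by apply/hc; apply/spanPcII.
  + split.
    * move=> x; rewrite D; split.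
        case=> a [u [ha hu ->]]; exists a, (E q u); split => //; split => //.
        by exists u.
      by case=> a [b [ha [[u [-> hu]] ->]]]; exists a, u.
    * move=> x hx [u [ex _]]; subst x.
      by have := OJ_E hq hx => ->; exact: E_zero.
- case=> S [hT [hD _]].
  have key (Pc : V6 K -> Prop) : Good Pc ->
      (forall x, S x <-> exists u, x = E q u /\ Pc u) ->
      is_ideal I /\ (forall p : {poly K}, J_of I p <-> q %| p).
    move=> G hS; apply: (Back hq G) => x; rewrite hD; split.
      case=> a [b [ha [/hS [u [-> hu]] ->]]]; exists a, u; split => //.
    case=> a [u [ha hu ->]]; exists a, (E q u); split => //; split => //.
    by apply/hS; exists u.
  case: hT => [/typeI_iff [e [d [g [e' [d' [g' [he hd hs]]]]]]] | /typeII_iff [eta [heta hs]]].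
  + apply: (key (PcI e d g e' d' g')); first exact: GoodI.
    move=> x; rewrite hs spanE; split; case=> u [-> hu]; exists u; split => //.
      by apply/spanPcI.
    by apply/spanPcI.
  + apply: (key (PcII eta)); first exact: GoodII.
    move=> x; rewrite hs spanE; split; case=> u [-> hu]; exists u; split => //.
      by apply/spanPcII.
    by apply/spanPcII.
Qed.
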